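(* Let $\mathcal{H}$ be a finite-dimensional Hilbert space. Every connected spanning set of pure states in $\mathcal{H}$ contains a subset that is a connected basis of $\mathcal{H}$. Every set of pure states in $\mathcal{H}$ that contains a connected spanning subset is itself a connected spanning set.
   Context: The transition graph of a set $\{|\psi_j\rangle\}$ of pure states has vertices the states, with two distinct vertices adjacent iff their inner product is nonzero; the set is connected if this graph is connected. A connected spanning set is a connected set spanning $\mathcal{H}$; a connected basis is a connected set that is a basis of $\mathcal{H}$. *)

(* Defs.v *)
(* H = C^n with C an algebraically closed numeric field
   (e.g. algC, or the complex numbers), standard inner product. *)
From HB Require Import structures.
From mathcomp Require Import all_boot all_order all_algebra.
From Stdlib Require Import Relations.
Set Implicit Arguments. Unset Strict Implicit. Unset Printing Implicit Defensive.
Import Order.TTheory GRing.Theory Num.Theory.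
Local Open Scope ring_scope.

Section Defs.
Variables (C : numClosedFieldType) (n : nat).
Notation vec := 'rV[C]_n.

Definition inner (u v : vec) : C := \sum_(i < n) (u 0 i)^* * v 0 i.

Definition pure_state (v : vec) : Prop := inner v v = 1.

Definition transition_edge (S : vec -> Prop) (u v : vec) : Prop :=
  S u /\ S v /\ u <> v /\ inner u v <> 0.

Definition connected_set (S : vec -> Prop) : Prop :=
  forall u v, S u -> S v -> clos_refl_trans vec (transition_edge S) u v.

Definition spans (S : vec -> Prop) : Prop :=
  forall w : vec, exists k (f : 'I_k -> vec) (a : 'I_k -> C),
    (forall i, S (f i)) /\ w = \sum_(i < k) a i *: f i.

Definition lin_indep (S : vec -> Prop) : Prop :=
  forall k (f : 'I_k -> vec) (a : 'I_k -> C),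
    injective f -> (forall i, S (f i)) ->
    \sum_(i < k) a i *: f i = 0 -> forall i, a i = 0.

Definition is_basis (S : vec -> Prop) : Prop := lin_indep S /\ spans S.

Definition set_of_pure_states (S : vec -> Prop) : Prop :=
  forall v, S v -> pure_state v.

Definition connected_spanning_set (S : vec -> Prop) : Prop :=
  set_of_pure_states S /\ connected_set S /\ spans S.

Definition connected_basis (S : vec -> Prop) : Prop :=
  set_of_pure_states S /\ connected_set S /\ is_basis S.

End Defs.

(* Main.v *)
From HB Require Import structures.
Require Import Defs.
From mathcomp Require Import all_boot all_order all_algebra.
From Stdlib Require Import Relations.
Set Implicit Arguments. Unset Strict Implicit. Unset Printing Implicit Defensive.
Import Order.TTheory GRing.Theory Num.Theory.
Local Open Scope ring_scope.

Section L.
Variables (C : numClosedFieldType) (n : nat).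
Notation vec := 'rV[C]_n.

Lemma inner_conj (u v : vec) : inner v u = (inner u v)^*.
Proof.
rewrite /inner rmorph_sum; apply: eq_bigr => i _.
rewrite rmorphM /= mulrC; congr (_ * _); exact: (esym (conjCK _)).
Qed.

Lemma inner_suml k (c : 'I_k -> C) (b : 'I_k -> vec) z :
  inner (\sum_i c i *: b i) z = \sum_i (c i)^* * inner (b i) z.
Proof.
rewrite /inner.
under eq_bigr => j _ do rewrite summxE rmorph_sum mulr_suml.
rewrite exchange_big /=; apply: eq_bigr => i _; rewrite mulr_sumr.
by apply: eq_bigr => j _; rewrite mxE rmorphM mulrA.
Qed.

Lemma nz_sum_exists k (c g : 'I_k -> C) :
  \sum_i c i * g i != 0 -> exists i, g i != 0.
Proof.
move=> H; case: (pickP (fun i => g i != 0)) => [i Hi|A]; first by exists i.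
move/negP: H; case; apply/eqP; apply: big1 => i _.
by move/negbT/negPn/eqP: (A i) ->; rewrite mulr0.
Qed.

Lemma edge_sym (S : vec -> Prop) u v : transition_edge S u v -> transition_edge S v u.
Proof.
move=> [Su [Sv [uv h]]]; do !split => //; first by move=> e; apply: uv.
rewrite inner_conj; apply/eqP; rewrite conjC_eq0; exact/eqP.
Qed.

Lemma crt_sym (S : vec -> Prop) u v : clos_refl_trans vec (transition_edge S) u v ->
  clos_refl_trans vec (transition_edge S) v u.
Proof.
elim => [x y e|x|x y z _ H1 _ H2].
- by apply: rt_step; apply: edge_sym.
- exact: rt_refl.
- exact: rt_trans H2 H1.
Qed.

Lemma crt_mono (S S' : vec -> Prop) u v : (forall x, S x -> S' x) ->
  clos_refl_trans vec (transition_edge S) u v ->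
  clos_refl_trans vec (transition_edge S') u v.
Proof.
move=> SS'; elim => [x y [Sx [Sy [xy h]]]|x|x y z _ H1 _ H2].
- by apply: rt_step; do !split => //; apply: SS'.
- exact: rt_refl.
- exact: rt_trans H1 H2.
Qed.

Lemma escape (S : vec -> Prop) (bs : seq vec) x y :
  clos_refl_trans vec (transition_edge S) x y ->
  x \in <<bs>>%VS -> y \notin <<bs>>%VS ->
  exists z, S z /\ z \notin <<bs>>%VS /\ exists2 b, b \in bs & inner b z <> 0.
Proof.
move=> H0; have H := @clos_rt_rt1n _ _ _ _ H0; clear H0; elim: H => [x0 Hx Hy|x0 x1 y0 [Sx0 [Sx1 [_ hx]]] _ IH Hx Hy].
  by rewrite Hx in Hy.
case Hx1: (x1 \in <<bs>>%VS); first exact: IH.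
exists x1; split => //; split; first by rewrite Hx1.
have E := @coord_span _ _ _ (in_tuple bs) x0 Hx.
move: hx; rewrite E inner_suml => /eqP /nz_sum_exists [i Hi].
exists bs`_i; first by apply: mem_nth; rewrite (ltn_ord i).
exact/eqP.
Qed.

Definition good (S : vec -> Prop) (bs : seq vec) :=
  (forall v, v \in bs -> S v) /\ free bs /\ connected_set (fun v => v \in bs).

Lemma dimfull : \dim (fullv : {vspace vec}) = n.
Proof. by rewrite dimvf dim_matrix mul1r. Qed.

Lemma step (S : vec -> Prop) bs : connected_spanning_set S -> good S bs -> (size bs < n)%N ->
  exists s, good S (s :: bs).
Proof.
move=> [pS [cS sS]] [bS [fb cb]] lt.
have [w _ Hw] : exists2 w, w \in vbasis (fullv : {vspace vec}) & w \notin <<bs>>%VS.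
  apply/allPn; apply/negP => /allP A.
  have : (fullv <= <<bs>>)%VS.
    by rewrite -{1}(span_basis (vbasisP fullv)); apply/span_subvP.
  move/dimvS; rewrite dimfull (eqnP fb) => le.
  by move: (leq_ltn_trans le lt); rewrite ltnn.
have [k [f [a [Sf Ew]]]] := sS w.
have [i Hi] : exists i, f i \notin <<bs>>%VS.
  case: (pickP (fun i => f i \notin <<bs>>%VS)) => [i Hi|A]; first by exists i.
  move/negP: Hw; case; rewrite Ew; apply: memv_suml => i _; apply: memvZ.
  exact/negPn/negbT/A.
clear Ew Hw w; case: bs bS fb cb lt Hi => [|b0 bs'] bS fb cb lt Hi.
  exists (f i); split; last split.
  - by move=> v; rewrite inE => /eqP ->.
  - rewrite seq1_free; apply/eqP => e; move: Hi; rewrite e span_nil memv0.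
    by rewrite eqxx.
  - by move=> u v; rewrite !inE => /eqP -> /eqP ->; apply: rt_refl.
have Hb0 : b0 \in <<b0 :: bs'>>%VS by apply: memv_span; rewrite inE eqxx.
have [z [Sz [Hz [b Hb Hbz]]]] := escape (cS _ _ (bS _ (mem_head _ _)) (Sf i)) Hb0 Hi.
set bs := b0 :: bs' in bS fb cb Hb Hz *.
have zb : z <> b by move=> e; move: Hz; rewrite e memv_span.
have e : transition_edge (fun v => v \in z :: bs) b z.
  by do !split => //; [rewrite in_cons Hb orbT | rewrite in_cons eqxx | move=> e0; apply: zb; rewrite e0].
have mono : forall u v, u \in bs -> v \in bs ->
    clos_refl_trans vec (transition_edge (fun v => v \in z :: bs)) u v.
  move=> u v Hu Hv; apply: (crt_mono _ (cb u v Hu Hv)).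
  by move=> x Hx; rewrite in_cons Hx orbT.
exists z; split; last split.
- by move=> v; rewrite in_cons => /orP [/eqP ->|]; [exact: Sz| exact: bS].
- by rewrite free_cons Hz fb.
- move=> u v; rewrite !in_cons => /orP [/eqP ->|Hu] /orP [/eqP ->|Hv].
  + exact: rt_refl.
  + exact: rt_trans (rt_step _ _ _ _ (edge_sym e)) (mono _ _ Hb Hv).
  + exact: rt_trans (mono _ _ Hu Hb) (rt_step _ _ _ _ e).
  + exact: mono.
Qed.

Lemma build (S : vec -> Prop) : connected_spanning_set S ->
  forall k, (k <= n)%N -> exists bs, size bs = k /\ good S bs.
Proof.
move=> cs; elim => [_|k IH lt].
  exists [::]; split => //; split; first by [].
  by split; [exact: nil_free | move=> u v].
have [bs [sz g]] := IH (ltnW lt).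
have [s g'] : exists s, good S (s :: bs) by apply: step cs g _; rewrite sz.
by exists (s :: bs); rewrite /= sz.
Qed.

Lemma part1 (S : vec -> Prop) : connected_spanning_set S ->
  exists B : vec -> Prop, (forall v, B v -> S v) /\ connected_basis B.
Proof.
move=> cs; have [bs [sz [bS [fb cb]]]] := build cs (leqnn n).
exists (fun v => v \in bs); split => //.
have [pS _] := cs.
split; first by move=> v /bS /pS.
split => //; split.
- move=> k f a injf Bf s0.
  pose X := [tuple f i | i < k].
  have Xi : forall i : 'I_k, X`_i = f i by move=> i; rewrite -tnth_nth tnth_mktuple.
  have fX : free X.
    have uX : uniq X.
      by apply/tuple_uniqP => i j; rewrite !tnth_mktuple; apply: injf.
    have : perm_eq X (filter (fun x => x \in X) bs).
      apply: uniq_perm uX (filter_uniq _ (free_uniq fb)) _.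
      move=> x; rewrite mem_filter; case Hx: (x \in X) => //=; symmetry.
      by move/tnthP: Hx => [i ->]; rewrite tnth_mktuple; apply: Bf.
    by move/perm_free ->; apply: filter_free.
  move/freeP: fX => H; apply: H.
  by under eq_bigr do rewrite Xi.
- move=> w.
  have sp : <<bs>>%VS = fullv.
    by apply/eqP; rewrite eqEdim subvf dimfull (eqnP fb) sz leqnn.
  have := @coord_span _ _ _ (in_tuple bs) w; rewrite /= sp memvf => /(_ isT) E.
  exists (size bs), (fun i => bs`_i), (fun i => coord (in_tuple bs) i w); split => //.
  by move=> i; apply: mem_nth.
Qed.

Lemma part2 (S : vec -> Prop) : set_of_pure_states S ->
  (exists T : vec -> Prop, (forall v, T v -> S v) /\ connected_spanning_set T) ->
  connected_spanning_set S.
Proof.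
move=> pS [T [TS [pT [cT sT]]]].
have reach : forall x, S x ->
    exists2 t, T t & clos_refl_trans vec (transition_edge S) x t.
  move=> x Sx; have [k [f [a [Tf E]]]] := sT x.
  have : inner x x != 0 by rewrite (pS x Sx) oner_neq0.
  rewrite {2}E inner_conj conjC_eq0 inner_suml => /nz_sum_exists [i Hi].
  exists (f i) => //.
  have [<-|ne] := eqVneq x (f i); first exact: rt_refl.
  apply: rt_step; do !split => //; first exact: TS.
    exact/eqP.
  rewrite inner_conj; apply/eqP; rewrite conjC_eq0; exact Hi.
split => //; split.
- move=> u v Su Sv.
  have [tu Tu Hu] := reach u Su; have [tv Tv Hv] := reach v Sv.
  apply: rt_trans Hu _; apply: rt_trans (crt_sym Hv).
  exact: crt_mono TS (cT _ _ Tu Tv).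
- move=> w; have [k [f [a [Tf E]]]] := sT w.
  by exists k, f, a; split => // i; apply: TS.
Qed.

End L.

Theorem lemma5 (C : numClosedFieldType) (n : nat) :
  (forall S : 'rV[C]_n -> Prop,
     connected_spanning_set S ->
     exists B : 'rV[C]_n -> Prop,
       (forall v, B v -> S v) /\ connected_basis B) /\
  (forall S : 'rV[C]_n -> Prop,
     set_of_pure_states S ->
     (exists T : 'rV[C]_n -> Prop,
        (forall v, T v -> S v) /\ connected_spanning_set T) ->
     connected_spanning_set S).
Proof. split; [exact: part1 | exact: part2]. Qed.
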